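(* Consider the SR2 method (described in the context) applied to $\min_x F(x) := f(x) + \mathcal{R}(x)$, and suppose Assumptions (A1), (A3) and (A5) of the context hold. Let $\sigma_{\textup{succ}} := \max\big(2\kappa_m/(1-\eta_2),\, 1/\lambda\big)$, where $\kappa_m$ is the constant of (A3) and $\lambda$ the constant of (A5). If at some iteration $t$ the computed step satisfies $s_t \neq 0$ and $\sigma_t \geq \sigma_{\textup{succ}}$, then $s_t$ is accepted (i.e. $x_{t+1} = x_t + s_t$) and $\sigma_{t+1} \leq \sigma_t$.
   Context: Problem: $F(x) = f(x) + \mathcal{R}(x)$ with $f(x) = \frac{1}{N}\sum_{i=1}^N f_i(x)$, $f_i:\mathbb{R}^n\to\mathbb{R}$ differentiable, and $\mathcal{R}:\mathbb{R}^n \to \mathbb{R}\cup\{\pm\infty\}$. For a nonempty sample $\xi \subseteq \{1,\dots,N\}$ set $f(x,\xi) := \frac{1}{|\xi|}\sum_{j\in\xi} f_j(x)$ and $\nabla f(x,\xi) := \frac{1}{|\xi|}\sum_{j\in\xi}\nabla f_j(x)$. A function $\mathcal{R}$ is proper if it never equals $-\infty$ and is finite somewhere; it is prox-bounded if there are $x$ and $\mu>0$ with $\inf_w \{\tfrac{1}{2}\mu^{-1}\|x-w\|^2 + \mathcal{R}(w)\} > -\infty$; the supremum of such $\mu$ is its prox-boundedness threshold. SR2 algorithm: parameters $0<\eta_1\le\eta_2<1$, $0<\gamma_3\le 1<\gamma_1\le\gamma_2$, a starting point $x_0$ where $\mathcal{R}$ is finite, $\sigma_0 \ge \sigma_{\min}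 > 0$. At iteration $t$: draw a random sample $\xi_t$, set $g_t := \nabla f(x_t,\xi_t)$, $\psi(s;x_t) := f(x_t,\xi_t) + g_t^T s + \mathcal{R}(x_t+s)$, $m(s;x_t,\sigma_t) := \psi(s;x_t) + \tfrac12\sigma_t\|s\|^2$, and compute $s_t \in \operatorname{argmin}_s m(s;x_t,\sigma_t)$ (if the sample is deemed inadequate, $s_t$ is set to $0$). Compute $\Delta F_t := F(x_t) - F(x_t+s_t)$, $\Delta\psi_t := \psi(0;x_t)-\psi(s_t;x_t)$, $\rho_t := \Delta F_t/\Delta\psi_t$ (with the convention $\rho_t = 0$ when $\Delta\psi_t = +\infty$). If $\rho_t \ge \eta_1$ (a successful iteration) set $x_{t+1} = x_t + s_t$, else $x_{t+1}=x_t$. Then choose $\sigma_{t+1} \in [\max(\sigma_{\min},\gamma_3\sigma_t),\sigma_t]$ if $\rho_t\ge\eta_2$; $\sigma_{t+1}\in[\sigma_t,\gamma_1\sigma_t]$ if $\eta_1\le\rho_t<\eta_2$; $\sigma_{t+1}\in[\gamma_1\sigma_t,\gamma_2\sigma_t]$ if $\rho_t<\eta_1$. Assumptions. (A1): there is $L>0$ with $\|\nabla f(x)-\nabla f(y)\|\le L\|x-y\|$ for all $x,y$; $\mathcal{R}$ is proper and lower semicontinuous everywhere, and $s\mapsto\mathcal{R}(x_t+s)$ is prox-bounded, with threshold $\lambda_{x_t}$, for every iterate $x_t$. (A3): there is $\kappa_m>0$ such that for all $t$, $|f(x_t+s_t)-f(x_t)-g_t^Ts_t| \le \kappa_m\|s_t\|^2$;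 moreover $\mathbb{E}_\xi[f(x_t,\xi)] = f(x_t)$ and $\mathbb{E}_\xi[g_t] = \nabla f(x_t)$. (A5): there is $\lambda>0$ with $\lambda_{x_t}\ge\lambda$ for all iterates $x_t$. *)

(* Defs.v *)
From HB Require Import structures.
From mathcomp Require Import all_boot all_order all_algebra.
From mathcomp Require Import all_classical all_reals all_analysis.
Set Implicit Arguments. Unset Strict Implicit. Unset Printing Implicit Defensive.
Import Order.TTheory GRing.Theory Num.Theory.
Import numFieldNormedType.Exports.
Local Open Scope ring_scope.
Local Open Scope classical_set_scope.

Section SR2Defs.
Variables (R : realType) (n : nat).
Notation V := 'rV[R]_n.

Definition dotv (u v : V) : R := \sum_(i < n) u ord0 i * v ord0 i.
Definition enorm (u : V) : R := Num.sqrt (dotv u u).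

Definition proper_fun (h : V -> \bar R) : Prop :=
  (forall x, h x != -oo%E) /\ (exists x, h x \is a fin_num).

Definition prox_bounded_at (h : V -> \bar R) (x : V) (mu : R) : Prop :=
  0 < mu /\
  (-oo < ereal_inf [set ((2 * mu)^-1 * enorm (x - w) ^+ 2)%:E + h w | w in setT])%E.

Definition prox_bounded (h : V -> \bar R) : Prop :=
  exists x mu, prox_bounded_at h x mu.

Definition prox_threshold (h : V -> \bar R) : \bar R :=
  ereal_sup [set mu%:E | mu in [set mu | exists x, prox_bounded_at h x mu]].

Definition avg (N : nat) (xi : {set 'I_N}) (F : 'I_N -> R) : R :=
  (#|xi|%:R)^-1 * \sum_(j in xi) F j.
Definition avgv (N : nat) (xi : {set 'I_N}) (F : 'I_N -> V) : V :=
  (#|xi|%:R)^-1 *: \sum_(j in xi) F j.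

Definition rho_ratio (dF dpsi : \bar R) : \bar R :=
  if dpsi == +oo%E then 0%E else (dF * ((fine dpsi)^-1)%:E)%E.

End SR2Defs.

(* Main.v *)
Require Import Defs.
From HB Require Import structures.
From mathcomp Require Import all_boot all_order all_algebra.
From mathcomp Require Import all_classical all_reals all_analysis.
From mathcomp Require Import lra ring.
Import Order.TTheory GRing.Theory Num.Theory.
Import numFieldNormedType.Exports.
Local Open Scope ring_scope.
Local Open Scope classical_set_scope.

Lemma dotv_ge0 (R : realType) n (u : 'rV[R]_n) : 0 <= dotv u u.
Proof. by apply: sumr_ge0 => i _; rewrite -expr2 sqr_ge0. Qed.

Lemma enorm2 (R : realType) n (u : 'rV[R]_n) : enorm u ^+ 2 = dotv u u.
Proof. by rewrite /enorm sqr_sqrtr // dotv_ge0. Qed.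

Lemma dotv0 (R : realType) n : dotv (0 : 'rV[R]_n) 0 = 0.
Proof. by rewrite /dotv big1 // => i _; rewrite mxE mul0r. Qed.

Lemma dotvr0 (R : realType) n (u : 'rV[R]_n) : dotv u 0 = 0.
Proof. by rewrite /dotv big1 // => i _; rewrite mxE mulr0. Qed.

Lemma dotv_gt0 (R : realType) n (u : 'rV[R]_n) : u != 0 -> 0 < dotv u u.
Proof.
move=> hu; rewrite lt0r dotv_ge0 andbT; apply: contra hu => /eqP.
move/psumr_eq0P => H; apply/eqP/rowP => j; rewrite mxE.
have /eqP : u ord0 j * u ord0 j = 0 by apply: H => // i _; rewrite -expr2 sqr_ge0.
by rewrite mulf_eq0 orbb => /eqP.
Qed.

Theorem theorem1
  (R : realType) (n N : nat)
  (* component functions f_i and their gradients *)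
  (fi : 'I_N -> 'rV[R]_n -> R) (gradfi : 'I_N -> 'rV[R]_n -> 'rV[R]_n)
  (Rg : 'rV[R]_n -> \bar R)
  (* algorithm parameters *)
  (eta1 eta2 gamma1 gamma2 gamma3 sigma_min : R)
  (* sampling distribution over subsets of {1..N} *)
  (P : {set 'I_N} -> R)
  (* iterates *)
  (x : nat -> 'rV[R]_n) (sigma : nat -> R) (xi : nat -> {set 'I_N})
  (adequate : nat -> bool) (s : nat -> 'rV[R]_n)
  (* constants of the assumptions *)
  (L kappa_m lambda : R)
  (t : nat) :
  let f := fun y => (N%:R)^-1 * \sum_(i < N) fi i y in
  let gradf := fun y => (N%:R)^-1 *: \sum_(i < N) gradfi i y in
  let fS := fun y (S : {set 'I_N}) => avg S (fun j => fi j y) in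
  let gS := fun y (S : {set 'I_N}) => avgv S (fun j => gradfi j y) in
  let F := fun y => ((f y)%:E + Rg y)%E in
  let g := fun k => gS (x k) (xi k) in
  let psi := fun k (u : 'rV[R]_n) => ((fS (x k) (xi k) + dotv (g k) u)%:E + Rg (x k + u)%R)%E in
  let m := fun k (u : 'rV[R]_n) => (psi k u + (2^-1 * sigma k * enorm u ^+ 2)%:E)%E in
  let dF := fun k => (F (x k) - F (x k + s k)%R)%E in
  let dpsi := fun k => (psi k 0%R - psi k (s k))%E in
  let rho := fun k => rho_ratio (dF k) (dpsi k) in
  (0 < N)%N ->
  (* f_i differentiable with gradient gradfi *)
  (forall i y, differentiable (fi i) y /\
      forall v, 'd (fi i) y v = dotv (gradfi i y) v) ->
  (* parameters *)
  0 < eta1 -> eta1 <= eta2 -> eta2 < 1 ->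
  0 < gamma3 -> gamma3 <= 1 -> 1 < gamma1 -> gamma1 <= gamma2 ->
  0 < sigma_min -> sigma_min <= sigma 0%N ->
  Rg (x 0%N) \is a fin_num ->
  (* sampling: a probability distribution on nonempty samples *)
  (forall S, 0 <= P S) -> \sum_S P S = 1 -> P (finset.set0 (T:='I_N)) = 0 ->
  (forall k, 0 < P (xi k)) ->
  (* step computation *)
  (forall k, adequate k -> forall u, (m k (s k) <= m k u)%E) ->
  (forall k, ~~ adequate k -> s k = 0) ->
  (* acceptance rule *)
  (forall k, (eta1%:E <= rho k)%E -> x k.+1 = x k + s k) ->
  (forall k, (rho k < eta1%:E)%E -> x k.+1 = x k) ->
  (* sigma update rule *)
  (forall k, (eta2%:E <= rho k)%E ->
      Num.max sigma_min (gamma3 * sigma k) <= sigma k.+1 <= sigma k) ->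
  (forall k, (eta1%:E <= rho k)%E -> (rho k < eta2%:E)%E ->
      sigma k <= sigma k.+1 <= gamma1 * sigma k) ->
  (forall k, (rho k < eta1%:E)%E ->
      gamma1 * sigma k <= sigma k.+1 <= gamma2 * sigma k) ->
  (* (A1) *)
  0 < L -> (forall y z, enorm (gradf y - gradf z) <= L * enorm (y - z)) ->
  proper_fun Rg -> lower_semicontinuous Rg ->
  (forall k, prox_bounded (fun u => Rg (x k + u)%R)) ->
  (* (A3) *)
  0 < kappa_m ->
  (forall k, `|f (x k + s k) - f (x k) - dotv (g k) (s k)| <= kappa_m * enorm (s k) ^+ 2) ->
  (forall k, \sum_S P S * fS (x k) S = f (x k)) ->
  (forall k, \sum_S P S *: gS (x k) S = gradf (x k)) ->
  (* (A5) *)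
  0 < lambda -> (forall k, (lambda%:E <= prox_threshold (fun u => Rg (x k + u)%R))%E) ->
  (* conclusion *)
  s t != 0 ->
  Num.max (2 * kappa_m / (1 - eta2)) lambda^-1 <= sigma t ->
  x t.+1 = x t + s t /\ sigma t.+1 <= sigma t.
Proof.
move=> f gradf fS gS F g psi m dF dpsi rho HN Hdiff He1 He12 He2 Hg3 Hg31 Hg1 Hg12
  Hsmin Hs0 HR0 HP0 HP1 HPe HPxi Hstep Hnad Hacc Hrej Hsv1 Hsv2 Hsv3 HL HLip Hprop
  Hlsc Hprox Hk Hkm Hf Hg Hl Hthr Hs Hsig.
have fin : forall k, Rg (x k) \is a fin_num.
  elim=> [|k IH] //.
  case: (leP (eta1%:E) (rho k)) => Hr; last by rewrite (Hrej k Hr).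
  rewrite (Hacc k Hr).
  case E: (Rg (x k + s k)) => [r| |] //; last first.
    by case: Hprop => /(_ (x k + s k)); rewrite E.
  exfalso; move: Hr.
  have -> : rho k = 0%E.
    rewrite /rho /rho_ratio /dpsi /psi /dF /F addr0.
    case E0: (Rg (x k)) IH => [r0| |] // _.
    by rewrite E /= invr0 mule0.
  by rewrite lee_fin leNgt He1.
have adt : adequate t by apply: contraNT Hs => /Hnad ->.
have Hmin := Hstep t adt 0.
case E0: (Rg (x t)) (fin t) => [r0| |] // _.
rewrite /m /psi addr0 E0 in Hmin.
case E1: (Rg (x t + s t)) Hmin => [r1| |]; last first.
  by case: Hprop => /(_ (x t + s t)); rewrite E1.
  by [].
rewrite -!EFinD lee_fin !enorm2 !dotvr0 => Hmin.
have Hrho : (eta2%:E <= rho t)%E.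
  rewrite /rho /rho_ratio /dpsi /psi /dF /F addr0 E0 E1 dotvr0.
  rewrite /= -!EFinD -EFinM lee_fin.
  have ns0 := @dotv_gt0 _ _ _ Hs.
  have Hsk := Hsig; rewrite ge_max in Hsk; case/andP: Hsk => Hsk _.
  have he : 0 < 1 - eta2 by rewrite subr_gt0.
  rewrite ler_pdivrMr // in Hsk.
  have := Hkm t; rewrite enorm2 ler_norml => /andP[Hk1 Hk2].
  set ns := dotv (s t) (s t) in Hmin ns0 Hk1 Hk2.
  set b := dotv (g t) (s t) in Hmin Hk1 Hk2 *.
  have hD : 2^-1 * sigma t * ns <= r0 - b - r1 by lra.
  have hp1 : 0 <= (1 - eta2) * (r0 - b - r1 - 2^-1 * sigma t * ns).
    by apply: mulr_ge0; [exact: ltW | rewrite subr_ge0].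
  have hp2 : 0 <= (sigma t * (1 - eta2) - 2 * kappa_m) * ns.
    by apply: mulr_ge0; [rewrite subr_ge0 | exact: ltW].
  have hDp : 0 < r0 - b - r1.
    have sig0 : 0 < sigma t by nra.
    have := mulr_gt0 sig0 ns0; lra.
  have -> : fS (x t) (xi t) + 0 + r0 - (fS (x t) (xi t) + b + r1) = r0 - b - r1 by ring.
  rewrite ler_pdivlMr //.
  nra.
split; last by case/andP: (Hsv1 t Hrho).
by apply: Hacc; rewrite (le_trans _ Hrho) // lee_fin.
Qed.
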